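(* Let $a\ge1$, let $\mathcal{P}$ be either $\mathcal{Q}_{a,a}$ or $\mathcal{U}_a$, and let $\nu$ be any permutation of $[a]$. Define $\mathcal{R}(I)=\sum_{(i,j)\in I}(-1)^{i+j}$ for $I\in J(\mathcal{P})$. Then $\mathcal{R}$ is homomesic for $\mathcal{T}_\nu$ acting on $J(\mathcal{P})$.
   Context: $J(P)$ is the set of order ideals of a finite poset $P$. Toggle: $\sigma_x(I)=I\cup\{x\}$ if $x\notin I$ and $I\cup\{x\}\in J(P)$; $I\setminus\{x\}$ if $x\in I$ and $I\setminus\{x\}\in J(P)$; $I$ otherwise. For a chain $C=\{x_1<\dots<x_m\}$, $\sigma_C=\sigma_{x_1}\circ\cdots\circ\sigma_{x_m}$. $\mathcal{Q}_{a,a}=[a]\times[a]$ with componentwise order and columns $C_c=\{(c,j):j\in[a]\}$; $\mathcal{U}_a=\{(i,j)\in[a]^2: i+j\ge a+1\}$ with componentwise order and columns $C_c=\{(c,j): a+1-c\le j\le a\}$. Comotion: $\mathcal{T}_\nu=\sigma_{C_{\nu(a)}}\circ\cdots\circ\sigma_{C_{\nu(1)}}$. A function on a finite set with a permutation $\tau$ is homomesic if its average over every $\tau$-orbit is the same constant. *)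

(* Defs.v *)
From HB Require Import structures.
From mathcomp Require Import all_boot all_order all_algebra all_fingroup.
Set Implicit Arguments. Unset Strict Implicit. Unset Printing Implicit Defensive.
Import GRing.Theory Num.Theory.

(* Ground set [a] x [a], 0-indexed: the pair (i, j) : 'I_a * 'I_a stands for
   the element (i+1, j+1) of the paper. *)
Definition pt (a : nat) := ('I_a * 'I_a)%type.

Definition ple (a : nat) (x y : pt a) : bool := (x.1 <= y.1)%N && (x.2 <= y.2)%N.

Definition Qaa (a : nat) : {set pt a} := [set: pt a].

(* U_a = {(i,j) : i + j >= a + 1} (1-indexed), i.e. i0 + j0 >= a - 1 (0-indexed) *)
Definition Ua (a : nat) : {set pt a} := [set x : pt a | (a.-1 <= x.1 + x.2)%N].

Definition is_ideal (a : nat) (P : {set pt a}) (I : {set pt a}) : bool :=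
  (I \subset P) &&
  [forall x in P, forall y in I, ple x y ==> (x \in I)].

Definition toggle (a : nat) (P : {set pt a}) (x : pt a) (I : {set pt a})
  : {set pt a} :=
  if x \notin I then (if is_ideal P (x |: I) then x |: I else I)
  else (if is_ideal P (I :\ x) then I :\ x else I).

(* column C_c = {(c, j) in P}, listed increasingly x_1 < ... < x_m;
   sigma_C = sigma_{x_1} o ... o sigma_{x_m} *)
Definition col_list (a : nat) (P : {set pt a}) (c : 'I_a) : seq (pt a) :=
  [seq x <- [seq (c, j) | j <- enum 'I_a] | x \in P].

Definition col_toggle (a : nat) (P : {set pt a}) (c : 'I_a) (I : {set pt a})
  : {set pt a} :=
  foldr (toggle P) I (col_list P c).

(* comotion T_nu = sigma_{C_{nu(a)}} o ... o sigma_{C_{nu(1)}} *)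
Definition comotion (a : nat) (P : {set pt a}) (nu : {perm 'I_a})
  (I : {set pt a}) : {set pt a} :=
  foldl (fun J i => col_toggle P (nu i) J) I (enum 'I_a).

(* R(I) = sum_{(i,j) in I} (-1)^(i+j)  (parity unchanged by 0-indexing) *)
Definition Rstat (a : nat) (I : {set pt a}) : int :=
  (\sum_(x in I) (-1) ^+ (x.1 + x.2))%R.

Definition homomesic (T : finType) (S : pred T) (tau : T -> T) (f : T -> int) :=
  exists c : rat, forall x, S x ->
    ((\sum_(y <- fingraph.orbit tau x) (f y)%:~R) / (size (fingraph.orbit tau x))%:R = c)%R.

(* Main.v *)
Require Import Defs.
From mathcomp Require Import all_boot all_order all_algebra all_fingroup.
From mathcomp Require Import zify.
Set Implicit Arguments. Unset Strict Implicit. Unset Printing Implicit Defensive.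
Import GRing.Theory Num.Theory.

Section Struct.
Variable n : nat.
Notation a := n.+1.
Variable P : {set pt a}.
Variable lo : nat -> nat.
Hypothesis hP : forall x : pt a, (x \in P) = (lo x.1 <= x.2).
Hypothesis hlo : forall c c', c <= c' -> lo c' <= lo c.
Hypothesis hloa : forall c, lo c <= a.
Implicit Types (I J K S : {set pt a}) (x y z : pt a).

Definition H (I : {set pt a}) (d : nat) : nat :=
  maxn (lo d) (\max_(x in I | nat_of_ord x.1 == d) x.2.+1).

Lemma idealS I x : is_ideal P I -> x \in I -> x \in P.
Proof. by case/andP=> /subsetP sIP _ /sIP. Qed.

Lemma idealD I x y : is_ideal P I -> x \in P -> y \in I -> ple x y -> x \in I.
Proof.
case/andP=> _ /forall_inP h xP yI le.
exact: (implyP ((forall_inP (h x xP)) y yI) le).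
Qed.

Lemma idealI I : (forall x, x \in I -> x \in P) ->
  (forall x y, x \in P -> y \in I -> ple x y -> x \in I) -> is_ideal P I.
Proof.
move=> h1 h2; apply/andP; split; first by apply/subsetP.
apply/forall_inP=> x xP; apply/forall_inP=> y yI; apply/implyP; exact: h2.
Qed.

Lemma H_lo I d : lo d <= H I d. Proof. exact: leq_maxl. Qed.

Lemma H_le I d : H I d <= a.
Proof. rewrite geq_max hloa /=. apply/bigmax_leqP => x _. exact: ltn_ord. Qed.

Lemma H_big I d : a <= d -> H I d = lo d.
Proof.
move=> ad; rewrite /H big_pred0 ?maxn0 // => x.
apply/andP=> -[_ /eqP e]; move: (ltn_ord x.1); rewrite e; lia.
Qed.

Lemma H_col I J d : (forall x : pt a, nat_of_ord x.1 = d -> (x \in I) = (x \in J)) ->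
  H I d = H J d.
Proof.
move=> h; rewrite /H; congr maxn; apply: eq_bigl => x /=.
case E: (nat_of_ord x.1 == d); rewrite ?andbT ?andbF //.
by rewrite h //; apply/eqP.
Qed.

Lemma colchar I x : is_ideal P I -> (x \in I) = (lo x.1 <= x.2 < H I x.1).
Proof.
move=> hI; apply/idP/idP.
- move=> xI; rewrite -hP (idealS hI xI) /=.
  apply: (leq_trans _ (leq_maxr _ _)).
  apply: (@leq_bigmax_cond _ (fun y => (y \in I) && (nat_of_ord y.1 == x.1)) (fun y => (y.2).+1) x).
  by rewrite xI eqxx.
- case/andP=> lx hx.
  have [y /andP[/andP[yI /eqP e] le]] :
      exists y, ((y \in I) && (nat_of_ord y.1 == x.1)) && (x.2 <= y.2).
    case: (boolP [exists y, ((y \in I) && (nat_of_ord y.1 == x.1)) && (x.2 <= y.2)]) => [/existsP //|].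
    rewrite negb_exists => /forallP hn.
    move: hx; rewrite /H.
    have : \max_(y in I | nat_of_ord y.1 == x.1) (y.2).+1 <= x.2.
      apply/bigmax_leqP => y yc. by have := hn y; rewrite yc /= -ltnNge.
    move: lx; lia.
  apply: (idealD hI _ yI); first by rewrite hP.
  by rewrite /ple e leqnn le.
Qed.

Lemma H_dec I c c' : is_ideal P I -> c <= c' -> H I c' <= H I c.
Proof.
move=> hI le; rewrite {1}/H geq_max (leq_trans (hlo le) (H_lo _ _)) /=.
apply/bigmax_leqP => y /andP[yI /eqP e].
have ca : c < a by rewrite (leq_ltn_trans le) // -e ltn_ord.
case: (leqP (lo c) y.2) => hy.
- have zI : ((Ordinal ca, y.2) : pt a) \in I.
    apply: (idealD hI _ yI); first by rewrite hP.
    by rewrite /ple /= e le leqnn.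
  by move: zI; rewrite colchar //= => /andP[].
- exact: leq_trans hy (H_lo _ _).
Qed.

Lemma H_uniq K (c : 'I_a) m : is_ideal P K -> lo c <= m <= a ->
  (forall j : 'I_a, ((c, j) \in K) = (lo c <= j < m)) -> H K c = m.
Proof.
move=> hK /andP[lm ma] h.
case: (ltngtP (H K c) m) => // cmp.
- have ja : H K c < a by lia.
  have := h (Ordinal ja); rewrite colchar //= ltnn H_lo cmp andbF.
  by move/esym; rewrite andbT; move: (H_lo K c); lia.
- have ja : m < a by move: (H_le K c); lia.
  have := h (Ordinal ja); rewrite colchar //= ltnn cmp lm.
  by rewrite andbF.
Qed.

Definition Uc I (c : nat) := if c == 0 then a else H I c.-1.
Definition Lc I (c : nat) := maxn (lo c) (H I c.+1).


Lemma pt_eq x y : (x == y) = (nat_of_ord x.1 == y.1) && (nat_of_ord x.2 == y.2).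
Proof.
case: x y => [x1 x2] [y1 y2] /=.
by rewrite xpair_eqE.
Qed.

Lemma add_ok I x : is_ideal P I -> x \in P -> x \notin I ->
  is_ideal P (x |: I) = (nat_of_ord x.2 == H I x.1) && (H I x.1 < Uc I x.1).
Proof.
move=> hI xP xnI; apply/idP/idP.
- move=> hK.
  have xl : lo x.1 <= x.2 by rewrite -hP.
  have hx : nat_of_ord x.2 = H I x.1.
    case: (ltngtP x.2 (H I x.1)) => // cmp.
    + by move: xnI; rewrite colchar // xl cmp.
    + have ja : H I x.1 < a by move: (ltn_ord x.2); lia.
      have zK : ((x.1, Ordinal ja) : pt a) \in x |: I.
        apply: (idealD hK _ (setU11 _ _)); first by rewrite hP /= H_lo.
        by rewrite /ple /= leqnn ltnW.
      move: zK; rewrite in_setU1 pt_eq /= eqxx /= (ltn_eqF cmp) /=.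
      by rewrite colchar //= ltnn andbF.
  rewrite hx eqxx /= /Uc.
  case: eqP => [_|c0]; first by rewrite -hx ltn_ord.
  have ca : (x.1).-1 < a by move: (ltn_ord x.1); lia.
  case: (leqP (lo (x.1).-1) x.2) => hl.
  + have zK : ((Ordinal ca, x.2) : pt a) \in x |: I.
      apply: (idealD hK _ (setU11 _ _)); first by rewrite hP.
      by rewrite /ple /= leqnn leq_pred.
    move: zK; rewrite in_setU1 pt_eq /=.
    have -> : ((x.1).-1 == x.1) = false by apply/negbTE; lia.
    by rewrite /= colchar //= -hx => /andP[].
  + by rewrite -hx; apply: leq_trans hl (H_lo _ _).
- case/andP=> /eqP hx hU.
  apply: idealI.
  + move=> z; rewrite in_setU1 => /orP[/eqP -> //|]; exact: idealS.
  + move=> z y zP; rewrite in_setU1 => /orP[/eqP -> | yI] le; last first.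
      by rewrite in_setU1 (idealD hI zP yI le) orbT.
    rewrite in_setU1; case: eqP => //= zx.
    have zl : lo z.1 <= z.2 by rewrite -hP.
    move: le; rewrite /ple => /andP[l1 l2].
    rewrite colchar // zl /=.
    case: (ltngtP z.1 x.1) => c1.
    * have hd := H_dec hI (_ : nat_of_ord z.1 <= (x.1).-1).
      move: hU; rewrite /Uc; case: eqP => [e|_]; first by move: c1; rewrite e.
      move=> hU; have := hd ltac:(lia). lia.
    * lia.
    * have : nat_of_ord z.2 != x.2.
        apply/negP=> /eqP e2; apply: zx.
        by apply/eqP; rewrite pt_eq c1 e2 !eqxx.
      move: hx; rewrite -c1 => hx; move: l2; lia.
Qed.

Lemma rem_ok I x : is_ideal P I -> x \in I ->
  is_ideal P (I :\ x) = ((x.2).+1 == H I x.1) && (Lc I x.1 <= x.2).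
Proof.
move=> hI xI.
have := xI; rewrite colchar // => /andP[xl xh].
apply/idP/idP.
- move=> hK.
  have hx : (x.2).+1 = H I x.1.
    case: (ltngtP (x.2).+1 (H I x.1)) => // cmp; last by move: xh cmp; lia.
    have ja : (x.2).+1 < a by move: (H_le I x.1); lia.
    have zI : ((x.1, Ordinal ja) : pt a) \in I :\ x.
      rewrite in_setD1 pt_eq /= eqxx /= (gtn_eqF (ltnSn _)) /=.
      by rewrite colchar //= cmp andbT; move: xl; lia.
    have := idealD hK (idealS hI xI) zI; rewrite /ple /= leqnn leqnSn => /(_ isT).
    by rewrite in_setD1 eqxx.
  rewrite hx eqxx /= /Lc geq_max xl /=.
  case: (ltnP (x.1).+1 a) => ca; last first.
    by rewrite H_big // (leq_trans (hlo (leqnSn _))).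
  rewrite leqNgt; apply/negP => cmp.
  have zI : ((Ordinal ca, x.2) : pt a) \in I :\ x.
    rewrite in_setD1 pt_eq /= eqxx andbT.
    have -> : ((x.1).+1 == x.1) = false by apply/negbTE; lia.
    by rewrite colchar //= cmp andbT (leq_trans (hlo (leqnSn _))).
  have := idealD hK (idealS hI xI) zI; rewrite /ple /= leqnn leqnSn => /(_ isT).
  by rewrite in_setD1 eqxx.
- case/andP=> /eqP hx hL.
  apply: idealI.
  + move=> z; rewrite in_setD1 => /andP[_]; exact: idealS.
  + move=> z y zP; rewrite in_setD1 => /andP[yx yI] le.
    rewrite in_setD1 (idealD hI zP yI le) andbT.
    apply/negP => /eqP ezx; subst z.
    move: le; rewrite /ple => /andP[l1 l2].
    have := yI; rewrite colchar // => /andP[yl yh].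
    case: (ltngtP x.1 y.1) => c1.
    * have hd := H_dec hI c1.
      move: hL; rewrite /Lc geq_max => /andP[_]; lia.
    * lia.
    * have : nat_of_ord y.2 != x.2.
        apply/negP=> /eqP e2; move: yx; rewrite pt_eq c1 e2 !eqxx; done.
      move: yh; rewrite -c1 -hx; lia.
Qed.

Lemma toggle_ideal I x : is_ideal P I -> is_ideal P (toggle P x I).
Proof. by rewrite /toggle => hI; case: ifP => _; case: ifP. Qed.

Lemma toggle_other I x y : y != x -> (y \in toggle P x I) = (y \in I).
Proof.
move=> yx; rewrite /toggle; case: ifP => _; case: ifP => _ //.
  by rewrite in_setU1 (negbTE yx).
by rewrite in_setD1 yx.
Qed.

Lemma toggle_H I x : is_ideal P I -> x \in P ->
  H (toggle P x I) x.1 =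
  if x.2 < H I x.1 then
    (if ((x.2).+1 == H I x.1) && (Lc I x.1 <= x.2) then nat_of_ord x.2 else H I x.1)
  else (if (nat_of_ord x.2 == H I x.1) && (H I x.1 < Uc I x.1) then (x.2).+1 else H I x.1).
Proof.
move=> hI xP.
have xl : lo x.1 <= x.2 by rewrite -hP.
have memx : (x \in I) = (x.2 < H I x.1) by rewrite colchar // xl.
rewrite /toggle memx; case: ltnP => hx /=.
- rewrite -(rem_ok hI); last by rewrite memx.
  case: ifP => // hK.
  apply: H_uniq => //; first by rewrite xl /= ltnW.
  move=> j; rewrite in_setD1 pt_eq /= eqxx /= colchar //=.
  move: hK; rewrite rem_ok ?memx // => /andP[/eqP e _].
  move: e hx; lia.
- rewrite -(add_ok hI xP); last by rewrite memx -leqNgt.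
  case: ifP => // hK.
  move: (hK); rewrite add_ok ?memx -?leqNgt // => /andP[/eqP e hu].
  apply: H_uniq => //; first by rewrite (leq_trans xl) //= ltn_ord.
  move=> j; rewrite in_setU1 pt_eq /= eqxx /= colchar //=.
  move: e hx hu xl; lia.
Qed.

Definition step (h U L : nat) := if h < U then h.+1 else L.

Lemma enum_ordE : enum 'I_a = [seq inord j | j <- iota 0 a].
Proof.
apply: (@inj_map _ _ val val_inj); rewrite val_enum_ord -map_comp.
symmetry; apply: map_id_in => j.
by rewrite mem_iota /= => ja; rewrite inordK.
Qed.

Lemma col_list_eq (c : 'I_a) :
  col_list P c = [seq ((c, inord j) : pt a) | j <- iota (lo c) (a - lo c)].
Proof.
rewrite /col_list enum_ordE -map_comp filter_map.
have e : iota 0 a = iota 0 (lo c) ++ iota (lo c) (a - lo c).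
  by rewrite -iotaD subnKC.
rewrite e filter_cat.
rewrite (@eq_in_filter _ _ pred0); last first.
  move=> j; rewrite mem_iota => jl.
  rewrite /= hP /= inordK; last by move: (hloa c) jl; lia.
  by apply/negbTE; move: jl; lia.
rewrite (@eq_in_filter _ _ predT (iota (lo c) _)); last first.
  move=> j; rewrite mem_iota => /andP[lj ja].
  by rewrite /= hP /= inordK ?lj //; move: ja (hloa c); lia.
by rewrite filter_pred0 filter_predT.
Qed.

Lemma foldr_toggle_ideal I s : is_ideal P I -> is_ideal P (foldr (toggle P) I s).
Proof. by move=> hI; elim: s => //= x s IH; exact: toggle_ideal. Qed.

Lemma col_toggle_ideal I c : is_ideal P I -> is_ideal P (col_toggle P c I).
Proof. exact: foldr_toggle_ideal. Qed.

Lemma col_toggle_other I (c : 'I_a) y : nat_of_ord y.1 != c ->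
  (y \in col_toggle P c I) = (y \in I).
Proof.
move=> yc; rewrite /col_toggle col_list_eq.
elim: (iota _ _) => //= j s IH.
rewrite toggle_other // pt_eq /=; by rewrite (negbTE yc).
Qed.

Lemma H_col_toggle_other I (c : 'I_a) (d : nat) : d != c ->
  H (col_toggle P c I) d = H I d.
Proof.
move=> dc; apply: H_col => y yd; apply: col_toggle_other; by rewrite yd.
Qed.

Lemma H_bounds I c : is_ideal P I ->
  [/\ lo c <= Lc I c, Lc I c <= H I c, H I c <= Uc I c & Uc I c <= a].
Proof.
move=> hI; split.
- exact: leq_maxl.
- by rewrite geq_max H_lo H_dec.
- rewrite /Uc; case: eqP => _; first exact: H_le.
  apply: H_dec => //; exact: leq_pred.
- rewrite /Uc; case: eqP => _ //; exact: H_le.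
Qed.

Lemma col_toggle_H I (c : 'I_a) : is_ideal P I ->
  H (col_toggle P c I) c = step (H I c) (Uc I c) (Lc I c).
Proof.
move=> hI.
have [b1 b2 b3 b4] := H_bounds c hI.
set h := H I c; set U := Uc I c; set L := Lc I c.
pose g m := if h < U then (if m <= h then h.+1 else h) else maxn L (minn h m).
pose S k := foldr (toggle P) I [seq ((c, inord j) : pt a) | j <- iota (a - k) k].
have key : forall k, k <= a - lo c ->
  [/\ is_ideal P (S k), (forall d : nat, d != c -> H (S k) d = H I d) & H (S k) c = g (a - k)].
  elim=> [|k IH] hk.
  - split => //; rewrite /S subn0 /=; rewrite /g; move: b1 b2 b3 b4; rewrite -/h -/U -/L.
    repeat (case: ifP => ?); lia.
  - have [i1 i2 i3] := IH (ltnW hk).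
    have ka : k < a by move: hk; lia.
    have eS : S k.+1 = toggle P ((c, inord (a - k.+1)) : pt a) (S k).
      rewrite /S; have -> : a - k = (a - k.+1).+1 by lia.
      by [].
    have xP : ((c, inord (a - k.+1)) : pt a) \in P.
      by rewrite hP /= inordK; lia.
    have eU : Uc (S k) c = U.
      rewrite /U /Uc; case: eqP => // c0; apply: i2; apply/eqP => e.
      by move: c0; lia.
    have eL : Lc (S k) c = L.
      rewrite /L /Lc; congr maxn; apply: i2; apply/eqP => e; lia.
    split.
    + rewrite eS; exact: toggle_ideal.
    + move=> d dc; rewrite eS -i2 //; apply: H_col => y yd.
      apply: toggle_other; rewrite pt_eq /= yd; by rewrite (negbTE dc).
    + rewrite eS (toggle_H i1 xP) /= inordK; last by lia.
      rewrite eU eL i3 /g; move: b1 b2 b3 b4; rewrite -/h -/U -/L => b1 b2 b3 b4.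
      have -> : a - k = (a - k.+1).+1 by lia.
      move: (a - k.+1) => m.
      case: (ltnP h U) => hu /=; [case: (leqP m.+1 h) => ? /=; case: (leqP m h) => ? /= | ];
      repeat (case: ifP => ?); lia.
have [_ _ e] := key (a - lo c) (leqnn _).
move: e; rewrite /S.
have -> : a - (a - lo c) = lo c by move: (hloa c); lia.
rewrite /col_toggle col_list_eq => ->.
rewrite /g /step; move: b1 b2 b3 b4; rewrite -/h -/U -/L => b1 b2 b3 b4.
repeat (case: ifP => ?); lia.
Qed.

Lemma toggleK I x : is_ideal P I -> toggle P x (toggle P x I) = I.
Proof.
move=> hI.
case: (boolP (x \in I)) => xI.
- have e1 : toggle P x I = if is_ideal P (I :\ x) then I :\ x else I by rewrite /toggle xI.
  rewrite e1; case hK: (is_ideal P (I :\ x)); last by rewrite e1 hK.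
  by rewrite /toggle !inE eqxx /= setD1K // hI.
- have e1 : toggle P x I = if is_ideal P (x |: I) then x |: I else I by rewrite /toggle xI.
  rewrite e1; case hK: (is_ideal P (x |: I)); last by rewrite e1 hK.
  by rewrite /toggle setU11 /= setU1K // hI.
Qed.

Lemma foldr_toggle_inj s I J : is_ideal P I -> is_ideal P J ->
  foldr (toggle P) I s = foldr (toggle P) J s -> I = J.
Proof.
move=> hI hJ; elim: s => //= x s IH e; apply: IH.
rewrite -(toggleK x (foldr_toggle_ideal s hI)) e toggleK //.
exact: foldr_toggle_ideal.
Qed.

Lemma col_toggle_inj c I J : is_ideal P I -> is_ideal P J ->
  col_toggle P c I = col_toggle P c J -> I = J.
Proof. exact: foldr_toggle_inj. Qed.

Section Comotion.
Variable nu : {perm 'I_a}.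
Definition st (J : {set pt a}) (i : 'I_a) := col_toggle P (nu i) J.
Notation T := (comotion P nu).

Lemma foldl_st_ideal s I : is_ideal P I -> is_ideal P (foldl st I s).
Proof. by elim: s I => //= i s IH I hI; apply: IH; exact: col_toggle_ideal. Qed.

Lemma foldl_st_inj s I J : is_ideal P I -> is_ideal P J ->
  foldl st I s = foldl st J s -> I = J.
Proof.
elim: s I J => //= i s IH I J hI hJ e.
apply: (@col_toggle_inj (nu i)) => //.
by apply: IH => //; exact: col_toggle_ideal.
Qed.

Lemma T_ideal I : is_ideal P I -> is_ideal P (T I).
Proof. exact: foldl_st_ideal. Qed.

Lemma T_inj I J : is_ideal P I -> is_ideal P J -> T I = T J -> I = J.
Proof. exact: foldl_st_inj. Qed.

Lemma foldl_st_H s I (d : nat) : (forall i, i \in s -> nat_of_ord (nu i) != d) ->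
  H (foldl st I s) d = H I d.
Proof.
elim: s I => //= i s IH I hs.
rewrite IH; last by move=> j js; apply: hs; rewrite inE js orbT.
apply: H_col_toggle_other; rewrite eq_sym; apply: hs; exact: mem_head.
Qed.

Lemma mem_ordseq (i : 'I_a) m l : m + l <= a ->
  (i \in [seq inord j | j <- iota m l]) = (m <= i < m + l).
Proof.
move=> ml; apply/mapP/idP.
- by case=> j; rewrite mem_iota => jin ->; rewrite inordK //; move: jin ml; lia.
- move=> hi; exists (nat_of_ord i); first by rewrite mem_iota.
  by rewrite inord_val.
Qed.

Lemma nu_eqd i (d : nat) : nat_of_ord (nu i) = d -> d < a -> i = (nu^-1)%g (inord d).
Proof. move=> e da; rewrite -(permK nu i); congr (_ _); apply: val_inj; by rewrite /= e inordK. Qed.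

Lemma nu_eqc i (c : 'I_a) : nat_of_ord (nu i) = c -> i = (nu^-1)%g c.
Proof. move=> e; rewrite -(permK nu i); congr (_ _); exact: val_inj. Qed.

Definition bef (d c : nat) := (d < a) && (nat_of_ord ((nu^-1)%g (inord d)) < nat_of_ord ((nu^-1)%g (inord c))).

Lemma T_col I (c : 'I_a) : is_ideal P I ->
  let U' := (if c == 0 :> nat then a else H (if bef c.-1 c then T I else I) c.-1) in
  let Hn' := H (if bef c.+1 c then T I else I) c.+1 in
  [/\ H (T I) c = step (H I c) U' (maxn (lo c) Hn'),
      H I c <= U', U' <= a & Hn' <= H I c].
Proof.
move=> hI U' Hn'.
set k := (nu^-1)%g c.
pose s1 := [seq (inord j : 'I_a) | j <- iota 0 k].
pose s2 := [seq (inord j : 'I_a) | j <- iota k.+1 (a - k.+1)].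
have ek : enum 'I_a = s1 ++ k :: s2.
  rewrite enum_ordE.
  have -> : iota 0 a = iota 0 k ++ nat_of_ord k :: iota k.+1 (a - k.+1).
    have ha : a = k + (a - k) by move: (ltn_ord k); lia.
    rewrite {1}ha iotaD add0n; congr (_ ++ _).
    have -> : a - k = (a - k.+1).+1 by move: (ltn_ord k); lia.
    by [].
  by rewrite map_cat /= inord_val.
pose J := foldl st I s1.
have hJ : is_ideal P J by exact: foldl_st_ideal.
have eT : T I = foldl st (st J k) s2 by rewrite /comotion ek foldl_cat.
have nuk : nu k = c by rewrite /k permKV.
have HJc : H J c = H I c.
  apply: foldl_st_H => i; rewrite mem_ordseq ?add0n => [hi|]; last by apply: ltnW.
  apply/eqP => e; have ei : i = k by apply: nu_eqc.
  by move: hi; rewrite ei ltnn andbF.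
have HTc : H (T I) c = H (st J k) c.
  rewrite eT; apply: foldl_st_H => i; rewrite mem_ordseq => [hi|]; last first.
    by move: (ltn_ord k); lia.
  apply/eqP => e; have ei : i = k by apply: nu_eqc.
  by move: hi; rewrite ei ltnn.
have nb : forall d : nat, d != c -> H J d = H (if bef d c then T I else I) d.
  move=> d dc; case: (ltnP d a) => da; last by rewrite !H_big.
  set i := (nu^-1)%g (inord d).
  have nui : nat_of_ord (nu i) = d by rewrite /i permKV inordK.
  have ik : i != k.
    apply/eqP => e; move: dc; rewrite -nui e nuk eqxx; done.
  rewrite /bef da /= -/i -/k.
  have cI : (inord c : 'I_a) = c by rewrite inord_val.
  rewrite cI -/k.
  case: ltnP => ik'.
  - rewrite eT foldl_st_H; last first.
      move=> j; rewrite mem_ordseq => [hj|]; last by move: (ltn_ord k); lia.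
      apply/eqP => e; have ej : j = i by apply: nu_eqd.
      by move: hj; rewrite ej; lia.
    rewrite /st H_col_toggle_other // nuk; by [].
  - rewrite /J foldl_st_H // => j; rewrite mem_ordseq ?add0n => [hj|]; last by apply: ltnW.
    apply/eqP => e; have ej : j = i by apply: nu_eqd.
    move: hj ik'; rewrite ej => hj.
    have : nat_of_ord i != k by [].
    lia.
have eU : Uc J c = U'.
  rewrite /Uc /U'; case: eqP => // c0; apply: nb; apply/eqP; move: c0; lia.
have eL : H J c.+1 = Hn'.
  rewrite /Hn'; apply: nb; apply/eqP; lia.
have [b1 b2 b3 b4] := H_bounds c hJ.
move: b2; rewrite /Lc geq_max => /andP[_ b2].
rewrite -eU -eL -HJc; split => //.
by rewrite HTc /st nuk col_toggle_H // /Lc eL.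
Qed.

End Comotion.

Lemma bef_anti (nu : {perm 'I_a}) (d c : nat) : d < a -> c < a -> d != c ->
  bef nu d c = ~~ bef nu c d.
Proof.
move=> da ca dc; rewrite /bef da ca /=.
have ne : nat_of_ord ((nu^-1)%g (inord d)) != nat_of_ord ((nu^-1)%g (inord c)).
  apply/negP => /eqP e; have e2 : (nu^-1)%g (inord d) = (nu^-1)%g (inord c) by apply: val_inj.
  have := perm_inj e2 => /(congr1 val); rewrite /= !inordK // => e3.
  by move: dc; rewrite e3 eqxx.
move: ne; lia.
Qed.

Local Open Scope ring_scope.

Definition cs (l h : nat) : int := \sum_(j < a) (if (l <= j < h)%N then (-1) ^+ j else 0).

Lemma Rstat_col I : is_ideal P I ->
  Rstat I = \sum_(c < a) (-1) ^+ c * cs (lo c) (H I c).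
Proof.
move=> hI.
transitivity (\sum_(c < a) \sum_(j < a) (if ((c, j) : pt a) \in I then (-1) ^+ (c + j) else 0 : int)).
  rewrite pair_big /Rstat big_mkcond /=; apply: eq_bigr => -[i j] _ //.
apply: eq_bigr => c _; rewrite /cs big_distrr; apply: eq_bigr => j _.
rewrite colchar //= exprD; case: ifP => _; by rewrite ?mulr0.
Qed.

Lemma csS l h : (h < a)%N -> cs l h.+1 = cs l h + (if (l <= h)%N then (-1) ^+ h else 0).
Proof.
move=> ha; rewrite /cs.
have -> : (if (l <= h)%N then (-1) ^+ h else 0 : int) =
    \sum_(j < a) (if (nat_of_ord j == h) && (l <= j)%N then (-1) ^+ j else 0).
  rewrite -big_mkcond /=; case: (leqP l h) => lh.
  - rewrite (bigD1 (Ordinal ha)) /=; last by rewrite eqxx lh.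
    rewrite big1 ?addr0 // => i /andP[/andP[/eqP e _]] ne; case/eqP: ne; exact: val_inj.
  - rewrite big_pred0 // => i; apply/negbTE; apply/negP => /andP[/eqP e]; move: lh; lia.
rewrite -big_split /=; apply: eq_bigr => j _.
by repeat (case: ifP => ?); rewrite ?addr0 ?add0r //; lia.
Qed.

Lemma sgnE k : (-1) ^+ k = (if odd k then -1 else 1 : int).
Proof. by rewrite -signr_odd; case: (odd k). Qed.

Lemma csE l h : (h <= a)%N -> cs l h = if (l <= h)%N then (-1) ^+ l * (odd (h - l))%:Z else 0.
Proof.
elim: h => [|h IH] ha.
- rewrite /cs big1 => [|j _]; last by rewrite ltn0 andbF.
  by case: l => //=; rewrite subnn /= mulr0.
- have ha' : (h <= a)%N by apply: ltnW.
  rewrite csS // (IH ha').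
  case: (leqP l h) => c1.
  + rewrite (leqW c1).
    have -> : h = (l + (h - l))%N by lia.
    rewrite addKn subSn ?leq_addr // ?addnK exprD !sgnE /= ?addKn.
    by case: (odd l); case: (odd (h - l)).
  + rewrite addr0.
    case: (leqP l h.+1) => c2 //.
    have e : l = h.+1 by lia.
    by rewrite e subnn mulr0.
Qed.

Definition F (c h : nat) : int := (-1) ^+ c * cs (lo c) h.

Section Summation.
Variable nu : {perm 'I_a}.
Notation T := (comotion P nu).
Variable D : nat -> nat -> nat -> int.
Variables K0 Ka : int.
Hypothesis LI : forall (c : 'I_a) h U Hn, (lo c <= h <= U)%N -> (U <= a)%N ->
  (c == 0 :> nat) ==> (U == a) -> (Hn <= h)%N -> (lo c.+1 <= Hn)%N ->
  (c.+1 == a) ==> (Hn == lo a) ->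
  F c h + F c (step h U (maxn (lo c) Hn)) = D c U h - D c.+1 (step h U (maxn (lo c) Hn)) Hn.
Hypothesis B0 : forall h, (lo 0 <= h <= a)%N -> D 0 a h = K0.
Hypothesis Ba : forall v, (v <= a)%N -> D a v (lo a) = Ka.

Lemma orbit_ideal (x y : {set pt a}) : is_ideal P x -> y \in fingraph.orbit T x -> is_ideal P y.
Proof.
move=> hx; rewrite /fingraph.orbit => /trajectP [i _ ->]; elim: i => //= i IH.
exact: T_ideal.
Qed.

Lemma traject_map (f : {set pt a} -> {set pt a}) (x : {set pt a}) k : map f (traject f x k) = traject f (f x) k.
Proof. by elim: k x => //= k IH x; rewrite IH. Qed.

Lemma orbit_shift (x : {set pt a}) (G : {set pt a} -> int) : is_ideal P x ->
  \sum_(y <- fingraph.orbit T x) G (T y) = \sum_(y <- fingraph.orbit T x) G y.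
Proof.
move=> hx.
have io : iter (fingraph.order T x) T x = x.
  apply: (@iter_order_in _ T [pred I | is_ideal P I]) => //.
  - move=> I; rewrite !inE; exact: T_ideal.
  - move=> I J; rewrite !inE => hI hJ; exact: T_inj.
rewrite /fingraph.orbit -(orderSpred T x) in io *.
move: (fingraph.order T x).-1 io => m io.
rewrite -(big_map T xpredT G) traject_map trajectSr -iterSr io.
by rewrite -cats1 big_cat big_seq1 /= big_cons addrC.
Qed.

Lemma pointwise (y : {set pt a}) : is_ideal P y ->
  Rstat y + Rstat (T y) = (K0 - Ka) + \sum_(c < n)
    (D c.+1 (H (if bef nu c c.+1 then T y else y) c) (H y c.+1) -
     D c.+1 (H (T y) c) (H (if bef nu c.+1 c then T y else y) c.+1)).
Proof.
move=> hy.
have hTy := T_ideal nu hy.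
rewrite !Rstat_col // -big_split /=.
have step1 : forall c : 'I_a, (-1) ^+ c * cs (lo c) (H y c) + (-1) ^+ c * cs (lo c) (H (T y) c) =
   D c (if c == 0 :> nat then a else H (if bef nu c.-1 c then T y else y) c.-1) (H y c) -
   D c.+1 (H (T y) c) (H (if bef nu c.+1 c then T y else y) c.+1).
  move=> c.
  have [e1 b1 b2 b3] := @T_col nu y c hy.
  rewrite -/(F c (H y c)) -/(F c (H (T y) c)) e1.
  apply: LI => //.
  - by rewrite H_lo b1.
  - by apply/implyP => e; rewrite e eqxx.
  - exact: H_lo.
  - by apply/implyP => /eqP e; rewrite e H_big.
rewrite (eq_bigr _ (fun c _ => step1 c)) sumrB.
rewrite big_ord_recl big_ord_recr /=.
rewrite B0; last by rewrite H_lo H_le.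
have -> : D a (H (T y) n) (H (if bef nu n.+1 n then T y else y) n.+1) = Ka.
  by rewrite (H_big _ (leqnn a)) Ba // H_le.
rewrite sumrB.
under eq_bigr => i _ do rewrite /bump ?add0n ?add1n.
set A1 := \sum_(i < n) _.
set A2 := \sum_(i < n) _.
lia.
Qed.

Lemma edge_zero (x : {set pt a}) (c : nat) : is_ideal P x -> (c < n)%N ->
  \sum_(y <- fingraph.orbit T x) (D c.+1 (H (if bef nu c c.+1 then T y else y) c) (H y c.+1) -
     D c.+1 (H (T y) c) (H (if bef nu c.+1 c then T y else y) c.+1)) = 0.
Proof.
move=> hx cn.
rewrite (bef_anti nu (d:=c.+1) (c:=c)); [|lia|lia|apply/eqP; lia].
case: (bef nu c c.+1) => /=.
- by rewrite big1 // => y0 _; rewrite subrr.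
- rewrite sumrB (orbit_shift (fun y : {set pt a} => D c.+1 (H y c) (H y c.+1))) //.
  by rewrite subrr.
Qed.

Lemma orbit_sum (x : {set pt a}) : is_ideal P x ->
  2 * \sum_(y <- fingraph.orbit T x) Rstat y = (size (fingraph.orbit T x))%:R * (K0 - Ka).
Proof.
move=> hx.
have -> : 2 * \sum_(y <- fingraph.orbit T x) Rstat y = \sum_(y <- fingraph.orbit T x) (Rstat y + Rstat (T y)).
  by rewrite big_split /= (orbit_shift (@Rstat a)) // mulr2n mulrDl mul1r.
rewrite big_seq; under eq_bigr => y yO do rewrite (pointwise (orbit_ideal hx yO)).
rewrite -big_seq.
rewrite big_split /= [X in _ + X]exchange_big /= [X in _ + X]big1 ?addr0.
  rewrite big_const_seq count_predT; elim: (size _) => [|k IH] /=; first by rewrite mul0r.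
  by rewrite IH -addn1 natrD mulrDl mul1r addrC.
move=> c _; exact: edge_zero.
Qed.

End Summation.

End Struct.

Local Open Scope ring_scope.

Section Q.
Variable n : nat.
Notation a := n.+1.
Definition loQ (c : nat) := 0%N.
Definition DQ (c v w : nat) : int :=
  if v == w then (-1) ^+ c * (odd v)%:Z else (-1) ^+ c * (odd (a - c))%:Z.

Lemma LIQ (c : 'I_a) h U Hn : (loQ c <= h <= U)%N -> (U <= a)%N ->
  (c == 0 :> nat) ==> (U == a) -> (Hn <= h)%N -> (loQ c.+1 <= Hn)%N ->
  (c.+1 == a) ==> (Hn == loQ a) ->
  F n loQ c h + F n loQ c (step h U (maxn (loQ c) Hn)) =
  DQ c U h - DQ c.+1 (step h U (maxn (loQ c) Hn)) Hn.
Proof.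
rewrite /loQ => /andP[_ hU] Ua _ Hh _ _.
have ca := ltn_ord c.
have -> : maxn 0 Hn = Hn by rewrite max0n.
rewrite /F /step.
case: ifP => hu.
- rewrite !csE //= ?subn0; try lia.
  rewrite /DQ (gtn_eqF hu) (gtn_eqF (_ : (Hn < h.+1)%N)) //.
  rewrite exprS !expr0 !mul1r !sgnE -!modn2.
  case: (odd c); lia.
- have eU : U = h by apply/eqP; rewrite eqn_leq hU leqNgt hu.
  rewrite !csE //= ?subn0; try lia.
  rewrite /DQ eU !eqxx exprS !expr0 !mul1r !sgnE -!modn2.
  case: (odd c); lia.
Qed.

Lemma B0Q h : (loQ 0 <= h <= a)%N -> DQ 0 a h = (odd a)%:Z.
Proof. by move=> _; rewrite /DQ expr0 !mul1r ?subn0; case: eqP => // <-. Qed.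

Lemma BaQ v : (v <= a)%N -> DQ a v (loQ a) = 0.
Proof. by move=> _; rewrite /DQ /loQ subnn /=; case: eqP => [->|]; rewrite /= mulr0. Qed.

End Q.

Section U.
Variable n : nat.
Notation a := n.+1.
Definition loU (c : nat) := (n - c)%N.
Definition sg : int := (-1) ^+ n.
Definition DU (c v w : nat) : int :=
  if c == a then (1 - a%:Z) * sg
  else if v == w then sg * (odd (v - loU c))%:Z - c%:Z * sg
  else (1 - c%:Z) * sg.

Lemma FU (c : 'I_a) h : (loU c <= h <= a)%N -> F n loU c h = sg * (odd (h - loU c))%:Z.
Proof.
case/andP=> h1 h2; rewrite /F csE // h1 mulrA -exprD /sg /loU subnKC //.
by move: (ltn_ord c); lia.
Qed.

Lemma LIU (c : 'I_a) h U Hn : (loU c <= h <= U)%N -> (U <= a)%N ->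
  (c == 0 :> nat) ==> (U == a) -> (Hn <= h)%N -> (loU c.+1 <= Hn)%N ->
  (c.+1 == a) ==> (Hn == loU a) ->
  F n loU c h + F n loU c (step h U (maxn (loU c) Hn)) =
  DU c U h - DU c.+1 (step h U (maxn (loU c) Hn)) Hn.
Proof.
move=> /andP[h1 hU] Ua _ Hh H1 /implyP H2.
have ca := ltn_ord c.
have ca' : (c == a :> nat) = false by apply/negbTE; lia.
have h1' := h1; have H1' := H1; rewrite /loU in h1' H1'.
rewrite /step; case: ifP => hu.
- rewrite !FU; [|lia|lia].
  rewrite /DU ca' (gtn_eqF hu) (gtn_eqF (_ : (Hn < h.+1)%N)); last by lia.
  case: eqP => e.
  + rewrite /sg !sgnE -!modn2; case: (odd n); move: e; rewrite /loU; lia.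
  + rewrite /sg !sgnE -!modn2; case: (odd n); move: e; rewrite /loU; lia.
- have eU : U = h by apply/eqP; rewrite eqn_leq hU leqNgt hu.
  rewrite !FU; [|lia|rewrite /loU; lia].
  rewrite /DU ca' eU eqxx.
  case: eqP => e.
  + have Hn0 : Hn = 0%N by move: H2; rewrite e eqxx /loU => /(_ isT) /eqP; lia.
    rewrite Hn0 /sg !sgnE -!modn2; case: (odd n); move: e; rewrite /loU; lia.
  + case: eqP => e2.
    * rewrite /sg !sgnE -!modn2; case: (odd n); move: e e2 H1; rewrite /loU; lia.
    * rewrite /sg !sgnE -!modn2; case: (odd n); move: e e2 H1; rewrite /loU; lia.
Qed.

Lemma B0U h : (loU 0 <= h <= a)%N -> DU 0 a h = sg.
Proof.
rewrite /DU /loU subn0 => /andP[h1 h2] /=.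
case: eqP => e; last by rewrite subr0 mul1r.
by rewrite subSnn mulr1 mul0r subr0.
Qed.

Lemma BaU v : (v <= a)%N -> DU a v (loU a) = (1 - a%:Z) * sg.
Proof. by rewrite /DU eqxx. Qed.
End U.


Lemma homo_gen n (P : {set pt n.+1}) (lo : nat -> nat) (D : nat -> nat -> nat -> int) (K0 Ka : int)
  (nu : {perm 'I_n.+1}) :
  (forall x : pt n.+1, (x \in P) = (lo x.1 <= x.2)%N) ->
  (forall c c', (c <= c')%N -> (lo c' <= lo c)%N) ->
  (forall c, (lo c <= n.+1)%N) ->
  (forall (c : 'I_n.+1) h U Hn, (lo c <= h <= U)%N -> (U <= n.+1)%N ->
    (c == 0 :> nat) ==> (U == n.+1) -> (Hn <= h)%N -> (lo c.+1 <= Hn)%N ->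
    (c.+1 == n.+1) ==> (Hn == lo n.+1) ->
    F n lo c h + F n lo c (step h U (maxn (lo c) Hn)) =
    D c U h - D c.+1 (step h U (maxn (lo c) Hn)) Hn) ->
  (forall h, (lo 0 <= h <= n.+1)%N -> D 0 n.+1 h = K0) ->
  (forall v, (v <= n.+1)%N -> D n.+1 v (lo n.+1) = Ka) ->
  homomesic (is_ideal P) (comotion P nu) (@Rstat n.+1).
Proof.
move=> hP hlo hloa LI B0 Ba.
exists ((K0 - Ka)%:~R / 2 : rat) => x hx.
have e := orbit_sum hP hlo hloa nu LI B0 Ba hx.
set O := fingraph.orbit _ x in e *.
have -> : \sum_(y <- O) ((Rstat y)%:~R : rat) = (\sum_(y <- O) Rstat y)%:~R.
  by elim: O {e} => [|y s IH]; rewrite ?big_nil ?big_cons ?intrD ?IH.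
have hN : ((size O)%:R : rat) != 0.
  by rewrite pnatr_eq0 -lt0n /O fingraph.size_orbit fingraph.order_gt0.
apply/eqP; rewrite eqr_div //.
have -> : (2 : rat) = (2 : int)%:~R by [].
have -> : ((size O)%:R : rat) = ((size O)%:R : int)%:~R by rewrite natz.
by rewrite -!intrM eqr_int mulrC e mulrC.
Qed.

Local Close Scope ring_scope.

Theorem mainTheorem12 (a : nat) (P : {set pt a}) (nu : {perm 'I_a}) :
  (0 < a)%N -> (P = Qaa a \/ P = Ua a) ->
  homomesic (is_ideal P) (comotion P nu) (@Rstat a).
Proof.
case: a P nu => [//|n] P nu _ [->|->].
- apply: (@homo_gen n _ (@loQ) (@DQ n) (odd n.+1)%:Z 0).
  + by move=> x; rewrite /Qaa in_setT.
  + by [].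
  + by [].
  + exact: LIQ.
  + exact: B0Q.
  + exact: BaQ.
- apply: (@homo_gen n _ (@loU n) (@DU n) (sg n) ((1 - n.+1%:Z) * sg n)).
  + move=> x; rewrite /Ua inE /loU /=; move: (ltn_ord x.1); lia.
  + rewrite /loU => c c' le; lia.
  + rewrite /loU => c; lia.
  + exact: LIU.
  + exact: B0U.
  + exact: BaU.
Qed.
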